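(* Let $\mathcal H$ be a complex Hilbert space of finite dimension $d\ge 2$. There is no quasi-probability representation $(\mu,\xi)$ of quantum theory on $\mathcal H$ (over any finite set $\Lambda$) that is non-negative, i.e. such that $\mu_\rho(\lambda)\ge 0$ for all $\rho\in\mathcal D(\mathcal H)$, $\lambda\in\Lambda$ and $\xi_E(\lambda)\in[0,1]$ for all $E\in\mathcal E(\mathcal H)$, $\lambda\in\Lambda$. Equivalently, every quasi-probability representation of quantum theory has negativity in its representation of states or of measurements (or both).
   Context: $\mathcal D(\mathcal H)$ denotes the set of density operators (positive semidefinite, trace one) on $\mathcal H$, $\mathcal E(\mathcal H)$ the set of effects (operators $E$ with $0\le E\le\mathbb 1$). A quasi-probability representation of quantum theory over a finite set $\Lambda$ is a pair of affine maps $\mu:\mathcal D(\mathcal H)\to\mathbb R^\Lambda$, $\rho\mapsto\mu_\rho$, and $\xi:\mathcal E(\mathcal H)\to\mathbb R^\Lambda$, $E\mapsto\xi_E$, such that for all $\rho\in\mathcal D(\mathcal H)$ and $E\in\mathcal E(\mathcal H)$: (a) $\mu_\rho(\lambda)\in\mathbb R$ and $\sum_{\lambda}\mu_\rho(\lambda)=1$; (b) $\xi_E(\lambda)\in\mathbb R$ and $\xi_{\mathbb 1}(\lambda)=1$ for all $\lambda$; (c) $\mathrm{Tr}(\rho E)=\sum_{\lambda\in\Lambda}\mu_\rho(\lambda)\xi_E(\lambda)$. *)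

(* Defs.v *)
From HB Require Import structures.
From mathcomp Require Import all_boot all_order all_algebra.
Set Implicit Arguments. Unset Strict Implicit. Unset Printing Implicit Defensive.
Import Order.TTheory GRing.Theory Num.Theory.
Local Open Scope ring_scope.

(* The complex Hilbert space of dimension d is C^d (column vectors 'cV[C]_d),
   operators are d x d matrices over a numClosedFieldType C (e.g. the complex
   numbers); "real numbers" are the elements x of C with x \is Num.real. *)

Definition adjmx (C : numClosedFieldType) (m n : nat) (A : 'M[C]_(m, n)) : 'M[C]_(n, m) :=
  (map_mx Num.conj A)^T.

Definition psdmx (C : numClosedFieldType) (d : nat) (A : 'M[C]_d) : Prop :=
  adjmx A = A /\ forall v : 'cV[C]_d, 0 <= (adjmx v *m A *m v) 0 0.

Definition density (C : numClosedFieldType) (d : nat) (rho : 'M[C]_d) : Prop :=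
  psdmx rho /\ \tr rho = 1.

Definition effect (C : numClosedFieldType) (d : nat) (E : 'M[C]_d) : Prop :=
  psdmx E /\ psdmx (1%:M - E).

(* (mu, xi) is a quasi-probability representation of quantum theory on C^d over
   the finite set Lambda.  Only the values of mu on D(H) and of xi on E(H) matter. *)
Definition quasi_prob_rep (C : numClosedFieldType) (d : nat) (Lambda : finType)
    (mu : 'M[C]_d -> Lambda -> C) (xi : 'M[C]_d -> Lambda -> C) : Prop :=
  (forall (r1 r2 : 'M[C]_d) (p : C), density r1 -> density r2 -> 0 <= p <= 1 ->
     forall l, mu (p *: r1 + (1 - p) *: r2) l = p * mu r1 l + (1 - p) * mu r2 l) /\
  (forall (E1 E2 : 'M[C]_d) (p : C), effect E1 -> effect E2 -> 0 <= p <= 1 ->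
     forall l, xi (p *: E1 + (1 - p) *: E2) l = p * xi E1 l + (1 - p) * xi E2 l) /\
  (forall rho, density rho -> (forall l, mu rho l \is Num.real) /\ \sum_l mu rho l = 1) /\
  (forall E, effect E -> forall l, xi E l \is Num.real) /\
  (forall l, xi 1%:M l = 1) /\
  (forall rho E, density rho -> effect E -> \tr (rho *m E) = \sum_l mu rho l * xi E l).

Definition nonnegative_rep (C : numClosedFieldType) (d : nat) (Lambda : finType)
    (mu : 'M[C]_d -> Lambda -> C) (xi : 'M[C]_d -> Lambda -> C) : Prop :=
  (forall rho l, density rho -> 0 <= mu rho l) /\
  (forall E l, effect E -> 0 <= xi E l <= 1).

(* Main.v *)
Require Import Defs.
From HB Require Import structures.
From mathcomp Require Import all_boot all_order all_algebra.
From Stdlib Require Import Lia Psatz.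
Import Order.TTheory GRing.Theory Num.Theory.
Local Open Scope ring_scope.
Section A.
Variable C : numClosedFieldType.
Lemma adjmxM (m n p : nat) (A : 'M[C]_(m,n)) (B : 'M[C]_(n,p)) : adjmx (A *m B) = adjmx B *m adjmx A.
Proof. by rewrite /adjmx map_mxM trmx_mul. Qed.
Lemma adjmxK (m n : nat) (A : 'M[C]_(m,n)) : adjmx (adjmx A) = A.
Proof. by apply/matrixP => i j; rewrite !mxE conjCK. Qed.
Lemma adjmxD (m n : nat) (A B : 'M[C]_(m,n)) : adjmx (A + B) = adjmx A + adjmx B.
Proof. by apply/matrixP => i j; rewrite !mxE rmorphD. Qed.
Lemma adjmxN (m n : nat) (A : 'M[C]_(m,n)) : adjmx (- A) = - adjmx A.
Proof. by apply/matrixP => i j; rewrite !mxE rmorphN. Qed.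
Lemma adjmxZ (m n : nat) c (A : 'M[C]_(m,n)) : adjmx (c *: A) = c^* *: adjmx A.
Proof. by apply/matrixP => i j; rewrite !mxE rmorphM. Qed.
Lemma adjmx1 (n : nat) : adjmx (1%:M : 'M[C]_n) = 1%:M.
Proof. by apply/matrixP => i j; rewrite !mxE rmorph_nat eq_sym. Qed.
Lemma psd_gram (d k : nat) (M : 'M[C]_(d,k)) : psdmx (M *m adjmx M).
Proof.
split; first by rewrite adjmxM adjmxK.
move=> v.
have -> : adjmx v *m (M *m adjmx M) *m v = adjmx (adjmx M *m v) *m (adjmx M *m v) by rewrite adjmxM adjmxK !mulmxA.
rewrite mxE; apply: sumr_ge0 => i _; rewrite !mxE mulrC; exact: mul_conjC_ge0.
Qed.
Lemma psd_scale (d : nat) (c : C) (A : 'M[C]_d) : c^* = c -> 0 <= c -> psdmx A -> psdmx (c *: A).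
Proof.
move=> cc c0 [h1 h2]; split; first by rewrite adjmxZ cc h1.
move=> v; rewrite -scalemxAr -scalemxAl mxE; exact: mulr_ge0.
Qed.
Lemma proj_props (d : nat) (w : 'cV[C]_d) (n : C) :
  adjmx w *m w = n%:M -> n^* = n -> 0 < n ->
  let P := n^-1 *: (w *m adjmx w) in density P /\ effect P.
Proof.
move=> hw hn n0 P.
have cn : (n^-1)^* = n^-1.
  by rewrite fmorphV /= hn.
have psdP : psdmx P by apply: psd_scale => //; [rewrite invr_ge0 ltW | apply: psd_gram].
have PP : P *m P = P.
  rewrite /P -(scalemxAl (n^-1) (w *m adjmx w)) -scalemxAr scalerA -mulmxA (mulmxA (adjmx w)) hw.
  rewrite mul_scalar_mx -scalemxAr scalerA divfK // gt_eqF //.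
split; first split => //.
  rewrite /P mxtraceZ mxtrace_mulC hw mxtrace_scalar mulr1n mulVf //.
  by rewrite gt_eqF.
split => //.
have aP : adjmx P = P by case: psdP.
have -> : 1%:M - P = (1%:M - P) *m adjmx (1%:M - P).
  rewrite adjmxD adjmxN adjmx1 aP mulmxBl !mulmxBr !mul1mx mulmx1 PP subrr subr0.
  done.
exact: psd_gram.
Qed.
Section Vec.
Variables (d : nat) (i0 i1 : 'I_d).
Hypothesis h01 : i0 != i1.
Definition wv (t : nat) : 'cV[C]_d := \col_i (if i == i0 then 1 else if i == i1 then t%:R else 0).
Lemma wv_inner s t : adjmx (wv s) *m wv t = ((1 + s * t)%N%:R)%:M.
Proof.
rewrite [LHS]mx11_scalar; congr (_%:M).
rewrite mxE (bigD1 i0) //= (bigD1 i1) //=.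
rewrite [X in _ + (_ + X)](_ : _ = 0); last first.
  apply: big1 => j /andP [hj0 hj1]; rewrite !mxE (negbTE hj1) (negbTE hj0) mulr0 //.
rewrite !mxE eqxx eq_sym (negbTE h01) eqxx /= rmorph1 rmorph_nat.
  by rewrite mul1r addr0 natrD natrM.
by rewrite eq_sym.
Qed.
Definition Pv (t : nat) : 'M[C]_d := ((1 + t * t)%N%:R)^-1 *: (wv t *m adjmx (wv t)).
Lemma Pv_props t : density (Pv t) /\ effect (Pv t).
Proof.
have h1 : ((1 + t * t)%N%:R : C)^* = (1 + t * t)%N%:R by rewrite rmorph_nat.
have h2 : (0 : C) < (1 + t * t)%N%:R by rewrite ltr0n add1n.
by move: (@proj_props d (wv t) _ (wv_inner t t) h1 h2).
Qed.
Lemma tr_Pv s t : \tr (Pv s *m Pv t) =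
   ((1 + s * t)%N%:R * (1 + t * s)%N%:R) / ((1 + s * s)%N%:R * (1 + t * t)%N%:R).
Proof.
rewrite /Pv -scalemxAl -scalemxAr scalerA mxtraceZ.
rewrite -mulmxA (mulmxA (adjmx (wv s))) wv_inner mul_scalar_mx -scalemxAr.
rewrite mxtraceZ mxtrace_mulC wv_inner mxtrace_scalar mulr1n.
by rewrite invfM [LHS]mulrC.
Qed.
End Vec.
End A.

Lemma nat_neq (s t : nat) : s <> t ->
  ((1 + s * t) * (1 + t * s) <> (1 + s * s) * (1 + t * t))%N.
Proof. rewrite -!multE -!plusE => ? ?; nia. Qed.

Theorem theorem2 (C : numClosedFieldType) (d : nat) (hd : (2 <= d)%N)
    (Lambda : finType) (mu : 'M[C]_d -> Lambda -> C) (xi : 'M[C]_d -> Lambda -> C) :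
  quasi_prob_rep mu xi -> ~ nonnegative_rep mu xi.
Proof.
move=> [_ [_ [hmu [_ [_ hc]]]]] [hpos hxi].
have h0 : (0 < d)%N by apply: leq_trans hd.
pose i0 : 'I_d := Ordinal h0.
pose i1 : 'I_d := Ordinal hd.
have h01 : i0 != i1 by [].
pose P t := Pv C d i0 i1 t.
have PD t : density (P t) by case: (Pv_props C d i0 i1 h01 t).
have PE t : effect (P t) by case: (Pv_props C d i0 i1 h01 t).
have trPP t : \tr (P t *m P t) = 1.
  rewrite /P (tr_Pv C d i0 i1 h01) divff //.
  by rewrite mulf_neq0 // pnatr_eq0 add1n.
have key t l : 0 < mu (P t) l -> xi (P t) l = 1.
  move=> hl.
  have hs : \sum_l0 (mu (P t) l0 - mu (P t) l0 * xi (P t) l0) = 0.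
    by rewrite sumrB -hc // trPP (proj2 (hmu _ (PD t))) subrr.
  have hge : forall i, predT i -> 0 <= mu (P t) i - mu (P t) i * xi (P t) i.
    move=> i _; rewrite -{1}[mu (P t) i]mulr1 -mulrBr; apply: mulr_ge0.
      exact: hpos.
    by rewrite subr_ge0; case/andP: (hxi _ i (PE t)).
  have := @psumr_eq0P _ _ predT (fun l0 => mu (P t) l0 - mu (P t) l0 * xi (P t) l0) hge hs l isT.
  move=> /= /eqP; rewrite -{1}[mu (P t) l]mulr1 -mulrBr mulf_eq0 => /orP [/eqP h | ].
    by move: hl; rewrite h ltxx.
  by rewrite subr_eq0 => /eqP <-.
pose N := #|{set Lambda}|.+1.
pose f (t : 'I_N) : {set Lambda} := [set l | 0 < mu (P t) l].
have : ~~ injectiveb f.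
  apply/negP => /injectiveP inj; have := leq_card f inj.
  by rewrite card_ord ltnn.
move=> /injectivePn [s [t hst hf]].
have : \tr (P s *m P t) = 1.
  rewrite hc // -(proj2 (hmu _ (PD s))); apply: eq_bigr => l _.
  have := hpos (P s) l (PD s); rewrite le0r => /orP [/eqP -> | hl]; first by rewrite mul0r.
  have : l \in f t by rewrite -hf inE.
  by rewrite inE => /key ->; rewrite mulr1.
rewrite /P (tr_Pv C d i0 i1 h01) => /eqP; rewrite -!natrM.
have nz : ((1 + s * s) * (1 + t * t))%N%:R != 0 :> C by rewrite pnatr_eq0 muln_eq0 negb_or !add1n.
rewrite (can2_eq (mulfVK nz) (mulfK nz)) mul1r.
rewrite eqr_nat => /eqP; apply: nat_neq.
by move=> e; move: hst; rewrite -val_eqE /= e eqxx.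
Qed.
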